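(* Let $m\ge1$, $n\ge1$, fix $t_0\in\mathbb{Z}^m$ and let $\mathcal{Z}=\{t\in\mathbb{Z}^m\mid t\ge t_0\}$. Let $T=(T_1,\dots,T_m)\in\mathbb{N}^m$, $T\ne0$. Let $A_\alpha\colon\mathcal{Z}\to\mathcal{M}_n(\mathbb{C})$, $\alpha\in\{1,\dots,m\}$, satisfy $$A_\alpha(t+1_\beta)A_\beta(t)=A_\beta(t+1_\alpha)A_\alpha(t),\quad \forall t\in\mathcal{Z},\ \forall\alpha,\beta,$$ and suppose $A_\alpha(t)$ is invertible for all $\alpha$ and all $t\in\mathcal{Z}$. Let $\Phi(t)=\chi(t,t_0)$, $t\in\mathcal{Z}$. Assume there exist a function $P\colon\mathcal{Z}\to\mathcal{M}_n(\mathbb{C})$ and constant invertible matrices $B_1,\dots,B_m\in\mathcal{M}_n(\mathbb{C})$ such that $P(t+T_\alpha\cdot1_\alpha)=P(t)$ for all $t\in\mathcal{Z}$ and all $\alpha$, $B_\alpha B_\beta=B_\beta B_\alpha$ for all $\alpha,\beta$, and $\Phi(t)=P(t)B_1^{t^1}\cdots B_m^{t^m}$ for all $t\ge t_0$. Consider the recurrences $$x(t+1_\alpha)=A_\alpha(t)x(t),\quad\forall t\ge t_0,\ \forall\alpha\in\{1,\dots,m\},\qquad (1)$$ $$y(t+1_\alpha)=B_\alpha y(t),\quad\forall t\ge t_0,\ \forall\alpha\in\{1,\dots,m\},\qquad (2)$$ for functions $x,y\colon\mathcal{Z}\to\mathbb{C}^n$. Then (each $P(t)$ being invertible) if $y$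 is a solution of (2), then $x(t):=P(t)y(t)$ is a solution of (1); and conversely, if $x$ is a solution of (1), then $y(t):=P(t)^{-1}x(t)$ is a solution of (2).
   Context: $\mathbb{N}=\{0,1,2,\dots\}$; $1_\alpha\in\mathbb{Z}^m$ has $1$ in position $\alpha$ and $0$ elsewhere; $s\le t$ in $\mathbb{Z}^m$ means $s^\alpha\le t^\alpha$ for all $\alpha$; $t=(t^1,\dots,t^m)$. Under the compatibility relations, for each $s\in\mathcal{Z}$ there is a unique $\chi(\cdot,s)\colon\{t\in\mathcal{Z}\mid t\ge s\}\to\mathcal{M}_n(\mathbb{C})$ with $\chi(s,s)=I_n$ and $\chi(t+1_\alpha,s)=A_\alpha(t)\chi(t,s)$ for all $t\ge s$ and all $\alpha$ (the transition matrix). Negative integer powers of invertible matrices are powers of the inverse. *)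

(* Defs.v *)
From HB Require Import structures.
From mathcomp Require Import all_boot all_order all_algebra.
From mathcomp Require Import reals complex.
Set Implicit Arguments. Unset Strict Implicit. Unset Printing Implicit Defensive.
Import Order.TTheory GRing.Theory Num.Theory.
Local Open Scope ring_scope.

(* points of Z^m, coordinates indexed by 'I_m (alpha = 1..m  <->  'I_m) *)
Definition pt (m : nat) := {ffun 'I_m -> int}.

Definition unit_pt (m : nat) (a : 'I_m) : pt m := [ffun b => ((b == a) : nat)%:Z].

Definition shift (m : nat) (t : pt m) (a : 'I_m) (k : int) : pt m :=
  [ffun b => t b + (if b == a then k else 0)].

Definition le_pt (m : nat) (s t : pt m) : Prop := forall a : 'I_m, s a <= t a.

Definition is_solution (C : ringType) (m n : nat) (t0 : pt m)
  (A : 'I_m -> pt m -> 'M[C]_n) (x : pt m -> 'cV[C]_n) : Prop :=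
  forall t, le_pt t0 t -> forall a : 'I_m, x (shift t a 1) = A a t *m x t.

(* Phi = chi(., t0): the transition matrix, i.e. the (unique) function with
   chi(t0,t0) = I and chi(t+1_a, t0) = A_a(t) chi(t, t0) for all t >= t0 and all a *)
Definition is_transition_from (C : ringType) (m n : nat) (t0 : pt m)
  (A : 'I_m -> pt m -> 'M[C]_n) (Phi : pt m -> 'M[C]_n) : Prop :=
  Phi t0 = 1%:M /\
  forall t, le_pt t0 t -> forall a : 'I_m, Phi (shift t a 1) = A a t *m Phi t.

(* Main.v *)
Require Import Defs.
From HB Require Import structures.
From mathcomp Require Import all_boot all_order all_algebra.
From mathcomp Require Import reals complex.
From mathcomp Require Import zify.
Import Order.TTheory GRing.Theory Num.Theory.
Local Open Scope ring_scope.

Section Aux.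
Variables (C : comUnitRingType) (m n : nat) (t0 : pt m).
Variable (A : 'I_m -> pt m -> 'M[C]_n.+1).
Variable (Phi : pt m -> 'M[C]_n.+1).
Hypothesis hAinv : forall t, le_pt t0 t -> forall a : 'I_m, A a t \in unitmx.
Hypothesis hPhi : is_transition_from t0 A Phi.

Definition dist (t : pt m) : nat := (\sum_b `|t b - t0 b|%N)%N.

Lemma le_shift1 t a : le_pt t0 t -> le_pt t0 (shift t a 1).
Proof.
move=> h b; rewrite ffunE; have := h b; case: (b == a) => /=; lia.
Qed.

Lemma Phi_unit_aux k : forall t, le_pt t0 t -> dist t = k -> Phi t \in unitmx.
Proof.
elim: k => [|k IH] t ht hd.
  have -> : t = t0.
    apply/ffunP => b; move: hd; rewrite /dist => /eqP; rewrite sum_nat_eq0.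
    move/forallP/(_ b) => /implyP/(_ isT); rewrite absz_eq0 subr_eq0 => /eqP ->.
    done.
  by case: hPhi => -> _; rewrite unitmx1.
have [a ha] : exists a, t0 a < t a.
  case: (pickP (fun a => t0 a < t a)) => [a ha|hn]; first by exists a.
  move: hd; rewrite /dist.
  rewrite big1 // => b _; have := hn b; have := ht b; move=> h1 /= h2.
  apply/eqP; rewrite absz_eq0 subr_eq0; apply/eqP; lia.
pose s := shift t a (-1).
have hs : le_pt t0 s.
  move=> b; rewrite ffunE; have := ht b; case: eqP => [->|_] /=; lia.
have hts : shift s a 1 = t.
  apply/ffunP => b; rewrite !ffunE; case: (b == a) => /=; lia.
case: hPhi => _ hP2; rewrite -hts hP2 // unitmx_mul hAinv //=; apply: (IH s hs).
move: hd; rewrite /dist (bigD1 a) //= (bigD1 a (P:=xpredT)) //=.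
have -> : (\sum_(i < m | i != a) `|s i - t0 i|%N = \sum_(i < m | i != a) `|t i - t0 i|%N)%N.
  by apply: eq_bigr => b /negbTE hb; rewrite /s ffunE hb addr0.
rewrite /s ffunE eqxx /=; move: ha; set S := (\sum_(i < m | i != a) _)%N; lia.
Qed.

Lemma Phi_unit t : le_pt t0 t -> Phi t \in unitmx.
Proof. by move=> ht; apply: (@Phi_unit_aux (dist t)). Qed.
End Aux.

Theorem theorem2p12 (R : realType) (m n : nat) (hm : (0 < m)%N) (t0 : pt m)
  (T : 'I_m -> nat) (hT : exists a : 'I_m, T a <> 0%N)
  (A : 'I_m -> pt m -> 'M[R[i]]_n.+1)
  (hcomp : forall t, le_pt t0 t -> forall a b : 'I_m,
      A a (shift t b 1) *m A b t = A b (shift t a 1) *m A a t)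
  (hAinv : forall t, le_pt t0 t -> forall a : 'I_m, A a t \in unitmx)
  (Phi : pt m -> 'M[R[i]]_n.+1) (hPhi : is_transition_from t0 A Phi)
  (P : pt m -> 'M[R[i]]_n.+1) (B : 'I_m -> 'M[R[i]]_n.+1)
  (hPper : forall t, le_pt t0 t -> forall a : 'I_m, P (shift t a (T a)%:Z) = P t)
  (hBinv : forall a : 'I_m, B a \in unitmx)
  (hBcomm : forall a b : 'I_m, B a *m B b = B b *m B a)
  (hFloquet : forall t, le_pt t0 t -> Phi t = P t *m \prod_(a < m) (B a ^ (t a))) :
  (forall t, le_pt t0 t -> P t \in unitmx) /\
  (forall y : pt m -> 'cV[R[i]]_n.+1, is_solution t0 (fun a _ => B a) y ->
      is_solution t0 A (fun t => P t *m y t)) /\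
  (forall x : pt m -> 'cV[R[i]]_n.+1, is_solution t0 A x ->
      is_solution t0 (fun a _ => B a) (fun t => invmx (P t) *m x t)).
Proof.
pose Q (t : pt m) : 'M[R[i]]_n.+1 := \prod_(a < m) (B a ^ (t a)).
have hBc : forall a b, GRing.comm (B a) (B b) by move=> a b; rewrite /GRing.comm -!mulmxE.
have hQu : forall t, Q t \is a GRing.unit.
  move=> t; apply: (big_ind (fun x => x \is a GRing.unit)).
    - exact: unitr1.
    - by move=> x y hx hy; rewrite unitrMl.
    by move=> b _; apply: unitrXz; apply: hBinv.
have hQs : forall t a, Q (shift t a 1) = B a * Q t.
  move=> t a; rewrite /Q.
  have -> : \prod_(b < m) B b ^ (shift t a 1 b) =
       \prod_(b < m) (B b ^ (t b) * (if b == a then B a else 1)).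
    apply: eq_bigr => b _; rewrite ffunE exprzDr; last by apply: hBinv.
    by case: eqP => [->|_]; rewrite ?expr1z ?expr0z.
  rewrite prodrM_comm; last first.
    move=> b c _ _; case: (c == a); last by apply: commr1.
    by apply/commr_sym/commrXz/hBc.
  rewrite -big_mkcond big_pred1_eq.
  by apply/commr_sym/commr_prod => b _; apply/commrXz/hBc.
have hPu : forall t, le_pt t0 t -> P t \in unitmx.
  move=> t ht; have := @Phi_unit _ _ _ t0 A Phi hAinv hPhi t ht; rewrite hFloquet // mulmxE.
  move=> h; have h' : P t * Q t \is a GRing.unit by exact: h.
  by move: h'; rewrite (unitrMl _ (hQu t)).
have key : forall t a, le_pt t0 t -> A a t * P t = P (shift t a 1) * B a.
  move=> t a ht; apply: (mulIr (hQu t)).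
  case: hPhi => _ hP2.
  have h := hP2 t ht a.
  rewrite (hFloquet t ht) (hFloquet _ (@le_shift1 m t0 t a ht)) in h.
  rewrite !mulmxE in h.
  rewrite -mulrA -[RHS]mulrA -(hQs t a); exact: (esym h).
split=> //; split.
  by move=> y hy t ht a /=; rewrite hy // mulmxA mulmxE -key // -mulmxE mulmxA.
move=> x hx t ht a /=; rewrite hx //.
have hA : A a t = P (shift t a 1) * B a * (P t)^-1.
  by rewrite -key // mulrK //; apply: hPu.
rewrite hA -!mulmxE -!mulmxA mulKmx; last exact: (hPu _ (@le_shift1 m t0 t a ht)).
by [].
Qed.
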